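(* Let $\Gamma$ be a graph of order $n$, size $m$, minimum degree $\delta$ and maximum degree $\Delta$. For every integer $k\in\{2-\delta,\dots,\delta\}$, $$\gamma_k^o(\Gamma)\ge\left\lceil\frac{(n+2\Delta+k)-\sqrt{(n+2\Delta+k)^2-4(2m+kn)}}{2}\right\rceil.$$
   Context: Graphs are finite and simple. For $S\subseteq V$ and $v\in V$, $\delta_S(v)$ is the number of neighbours of $v$ in $S$, $\overline{S}=V\setminus S$, and $\partial(S)$ the set of vertices of $\overline{S}$ with a neighbour in $S$. A nonempty $S$ is an offensive $k$-alliance if $\delta_S(v)\ge\delta_{\overline{S}}(v)+k$ for every $v\in\partial(S)$, and a global offensive $k$-alliance if moreover it is dominating; $\gamma_k^o(\Gamma)$ is the minimum cardinality of a global offensive $k$-alliance in $\Gamma$. *)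

(* Defs.v *)
From HB Require Import structures.
From mathcomp Require Import all_boot all_order all_algebra.
From mathcomp Require Import reals.
Set Implicit Arguments. Unset Strict Implicit. Unset Printing Implicit Defensive.
Import Order.TTheory GRing.Theory Num.Theory.

Definition simple_graph (T : finType) (e : rel T) : Prop :=
  symmetric e /\ irreflexive e.

Section Graph.
Variables (T : finType) (e : rel T).

Definition deg_in (S : {set T}) (v : T) : nat := #|[set u in S | e v u]|.
Definition deg (v : T) : nat := deg_in setT v.

Definition graph_order : nat := #|T|.
Definition edges : {set {set T}} :=
  [set E : {set T} | [exists u, exists v, e u v && (E == [set u; v])]].
Definition size_graph : nat := #|edges|.
(* for nonempty T every degree is < #|T|, so the identity #|T| is harmless *)
Definition min_deg : nat := \big[minn/#|T|]_(v : T) deg v.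
Definition max_deg : nat := \max_(v : T) deg v.

Definition boundary (S : {set T}) : {set T} :=
  [set v in ~: S | [exists u in S, e v u]].

Definition offensive_alliance (k : int) (S : {set T}) : bool :=
  (S != set0) &&
  [forall v in boundary S, ((deg_in S v)%:Z >= (deg_in (~: S) v)%:Z + k)%R].

Definition dominating (S : {set T}) : bool :=
  [forall v in ~: S, [exists u in S, e v u]].

Definition global_offensive_alliance (k : int) (S : {set T}) : bool :=
  offensive_alliance k S && dominating S.

(* gamma_k^o : minimum cardinality of a global offensive k-alliance
   (the default #|T| is attained by S = V when T is nonempty) *)
Definition gamma_o (k : int) : nat :=
  \big[minn/#|T|]_(S : {set T} | global_offensive_alliance k S) #|S|.

End Graph.

(* Main.v *)
Require Import Defs.
From HB Require Import structures.
From mathcomp Require Import all_boot all_order all_algebra.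
From mathcomp Require Import reals lra.
Import Order.TTheory GRing.Theory Num.Theory.

Section G.
Variables (T : finType) (e : rel T).
Hypothesis (Hs : symmetric e) (Hi : irreflexive e).

Lemma deg_inE S v : deg_in e S v = \sum_(u in S) (e v u : nat).
Proof.
rewrite /deg_in -sum1_card big_mkcond /= [RHS]big_mkcond /=.
apply: eq_bigr => u _; rewrite inE; by case: (u \in S); case: (e v u).
Qed.

Lemma deg_split S v : deg e v = (deg_in e S v + deg_in e (~: S) v)%N.
Proof.
rewrite /deg !deg_inE (bigID (fun u => u \in S)) /=.
congr (_ + _)%N; apply: eq_bigl => u; by rewrite !inE.
Qed.

Lemma deg_in_le S v : (deg_in e S v <= #|S|)%N.
Proof. apply: subset_leq_card; apply/subsetP => u; rewrite inE; by case/andP. Qed.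

Lemma deg_in_deg S v : (deg_in e S v <= deg e v)%N.
Proof. rewrite (deg_split S v); exact: leq_addr. Qed.

Lemma exch S :
  (\sum_(v in ~: S) deg_in e S v = \sum_(u in S) deg_in e (~: S) u)%N.
Proof.
under eq_bigr do rewrite deg_inE.
rewrite exchange_big /=; apply: eq_bigr => u _; rewrite deg_inE.
apply: eq_bigr => v _; by rewrite Hs.
Qed.

Lemma handshake : (\sum_v deg e v = 2 * size_graph e)%N.
Proof.
have H1 : (\sum_(E in edges e) #|E| = 2 * size_graph e)%N.
  rewrite /size_graph -sum1_card big_distrr /=; apply: eq_bigr => E.
  rewrite inE => /existsP [u /existsP [v /andP [huv /eqP ->]]].
  rewrite cards2; case: eqP => [eq|//]; by rewrite eq Hi in huv.
rewrite -H1.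
have H2 : forall E : {set T}, #|E| = \sum_v (v \in E : nat).
  move=> E; rewrite -sum1_card big_mkcond /=; apply: eq_bigr => v _.
  by case: (v \in E).
under [RHS]eq_bigr do rewrite H2.
rewrite exchange_big /=; apply: eq_bigr => v _.
rewrite -big_mkcondr /= sum1dep_card.
rewrite /deg /deg_in.
have -> : [set u in setT | e v u] = [set u | e v u].
  by apply/setP => u; rewrite !inE.
set A := [set u | e v u].
have -> : [set E in edges e | v \in E] = [set [set v; u] | u in A].
  apply/setP => E; rewrite [in LHS]inE /=; apply/andP/imsetP.
  - rewrite inE; case=> /existsP [a /existsP [b /andP [hab /eqP ->]]].
    rewrite !inE => /orP [] /eqP hv; subst v.
      by exists b; rewrite ?inE.
    exists a; first by rewrite inE Hs.
    by rewrite setUC.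
  - case=> u; rewrite inE => hu ->; split.
      rewrite inE; apply/existsP; exists v; apply/existsP; exists u; by rewrite hu eqxx.
    by rewrite !inE eqxx.
rewrite card_in_imset //.
move=> a b; rewrite !inE => ha hb hab.
have : a \in [set v; b] by rewrite -hab !inE eqxx orbT.
rewrite !inE => /orP [/eqP hav|/eqP //].
by rewrite -hav Hi in ha.
Qed.

End G.

Local Open Scope ring_scope.

Lemma intR (R : realType) (a : nat) : (Posz a)%:~R = a%:R :> R.
Proof. by []. Qed.

Lemma quad (R : realType) (T : finType) (e : rel T) (Hs : symmetric e)
  (Hi : irreflexive e) (k : int) (S : {set T})
  (HS : global_offensive_alliance e k S) :
  forall s n m D kR : R, s = #|S|%:R -> n = (graph_order T)%:R ->
  m = (size_graph e)%:R -> D = (max_deg e)%:R -> kR = k%:~R ->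
  s ^+ 2 - (n + 2 * D + kR) * s + (2 * m + kR * n) <= 0.
Proof.
move=> s n m D kR hs hn hm hD hk.
case/andP: HS => /andP [_ /forallP Hall] /forallP Hdom.
pose c : R := #|~: S|%:R.
have hN : n = s + c by rewrite hn hs /c -natrD cardsC.
pose E : R := \sum_(v in ~: S) (deg_in e S v)%:R.
pose SS : R := \sum_(v in S) (deg e v)%:R.
pose SC : R := \sum_(v in ~: S) (deg e v)%:R.
have h1 : SC + kR * c <= 2 * E.
  have : \sum_(v in ~: S) ((deg e v)%:R + kR) <= \sum_(v in ~: S) 2 * (deg_in e S v)%:R.
    apply: ler_sum => v hv.
    have hb : v \in boundary e S.
      rewrite inE hv /=; exact: (implyP (Hdom v) hv).
    have := implyP (Hall v) hb.
    rewrite -(ler_int R) rmorphD /= !intR => H.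
    rewrite (@deg_split _ e S v) natrD hk; lra.
  by rewrite big_split /= sumr_const -mulr_sumr mulr_natr mulrC.
have h2 : SS + SC = 2 * m.
  rewrite /SS /SC -!natr_sum -natrD hm -natrM -(@handshake _ e Hs Hi).
  rewrite [in RHS](bigID (fun v => v \in S)) /=.
  congr (_ + _)%:R; apply: eq_bigl => v; by rewrite ?inE.
have h3 : SS <= s * D.
  rewrite /SS -natr_sum hs hD -natrM ler_nat -sum_nat_const.
  apply: leq_sum => v _; exact: leq_bigmax.
have h4 : E <= s * c.
  rewrite /E -natr_sum hs /c -natrM ler_nat mulnC -sum_nat_const.
  apply: leq_sum => v _; exact: (@deg_in_le _ e).
have h5 : E <= s * D.
  rewrite /E -natr_sum hs hD -natrM ler_nat (@exch _ e Hs) -sum_nat_const.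
  apply: leq_sum => v _; apply: leq_trans (@deg_in_deg _ e _ _) _.
  exact: leq_bigmax.
rewrite hN; nra.
Qed.

Theorem mainTheorem17 (R : realType) (T : finType) (e : rel T)
  (He : simple_graph e) (Hn : (0 < #|T|)%N) (k : int)
  (Hk1 : 2%:Z - (min_deg e)%:Z <= k) (Hk2 : k <= (min_deg e)%:Z) :
  let n : R := (graph_order T)%:R in
  let m : R := (size_graph e)%:R in
  let D : R := (max_deg e)%:R in
  let kR : R := k%:~R in
  Num.ceil (((n + 2 * D + kR) - Num.sqrt ((n + 2 * D + kR) ^+ 2 - 4 * (2 * m + kR * n))) / 2)
    <= (gamma_o e k)%:Z.
Proof.
case: He => Hs Hi.
cbv zeta.
set n : R := (graph_order T)%:R. set m : R := (size_graph e)%:R.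
set D : R := (max_deg e)%:R. set kR : R := k%:~R.
have key : forall S, global_offensive_alliance e k S ->
  Num.ceil (((n + 2 * D + kR) - Num.sqrt ((n + 2 * D + kR) ^+ 2 - 4 * (2 * m + kR * n))) / 2)
    <= #|S|%:Z.
  move=> S HS.
  have hq := @quad R _ _ Hs Hi _ _ HS _ _ _ _ _ (erefl (#|S|%:R : R)) (erefl n) (erefl m) (erefl D) (erefl kR).
  rewrite ceil_le_int intR.
  set B := n + 2 * D + kR; set C := 2 * m + kR * n; set s : R := #|S|%:R.
  have h1 : (B - 2 * s) ^+ 2 <= B ^+ 2 - 4 * C by rewrite /B /C; nra.
  have h2 : B - 2 * s <= Num.sqrt (B ^+ 2 - 4 * C).
    apply: le_trans (ler_wsqrtr h1).
    by rewrite sqrtr_sqr ler_norm.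
  lra.
rewrite /gamma_o.
apply: (big_ind (fun x : nat => _ <= x%:Z)).
- have := key setT.
  rewrite cardsT; apply.
  rewrite /global_offensive_alliance /offensive_alliance /dominating.
  apply/andP; split; [apply/andP; split|].
  + apply/set0Pn; have [x _] := card_gt0P Hn; by exists x; rewrite inE.
  + apply/forallP => v; apply/implyP; by rewrite inE setCT inE.
  + apply/forallP => v; apply/implyP; by rewrite setCT inE.
- move=> x y hx hy; rewrite /minn; by case: ifP.
- by move=> S HS; exact: key.
Qed.
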